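(* Let $m$ be a positive integer and let $Q_1,\dots,Q_m$ be the partition of $\{0,1,\dots,m+1\}^3$ given by $(x,y,z)\in Q_i \iff f(x,y,z)=i$, where $f$ is defined below. Then for every $1\le i<j\le m$, $Q_i$ and $Q_j$ are adjacent (i.e. the partition is internally adjacent).
   Context: Define $f:\{0,\dots,m+1\}^3\to\{1,\dots,m\}$ by: $f(x,y,z)=y$ if $0\le x\le m$, $1\le y\le m$, $z=0$; $f(x,y,z)=x$ if $1\le x\le m$, $0\le y\le m$, $z=m+1$; $f(x,y,z)=y$ if $x=0$, $1\le y\le m$, $1\le z\le m$; $f(x,y,z)=x$ if $1\le x\le m$, $y=0$, $1\le z\le m$; $f(x,y,z)=z$ if $1\le x\le m+1$, $1\le y\le m+1$, $1\le z\le m$; and $f(x,y,z)=1$ for all remaining points. Two disjoint sets $P,Q\subset\mathbb{Z}^3$ are adjacent if there exist $p\in P$, $q\in Q$ and a unit vector $v$ parallel to a coordinate axis with $p+v=q$. *)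

(* Defs.v *)
From Stdlib Require Import ZArith Lia Bool.
Open Scope bool_scope.
Open Scope Z_scope.

Definition pt := (Z * Z * Z)%type.

Definition inr (lo hi x : Z) : bool := (lo <=? x) && (x <=? hi).

(* The colouring function f : {0..m+1}^3 -> {1..m}; the five listed cases
   are pairwise disjoint, so the if-chain is order independent. *)
Definition f (m x y z : Z) : Z :=
  if inr 0 m x && inr 1 m y && (z =? 0) then y
  else if inr 1 m x && inr 0 m y && (z =? m + 1) then x
  else if (x =? 0) && inr 1 m y && inr 1 m z then y
  else if inr 1 m x && (y =? 0) && inr 1 m z then x
  else if inr 1 (m + 1) x && inr 1 (m + 1) y && inr 1 m z then z
  else 1.

Definition in_cube (m : Z) (p : pt) : Prop :=
  let '(x, y, z) := p in
  0 <= x <= m + 1 /\ 0 <= y <= m + 1 /\ 0 <= z <= m + 1.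

Definition Q (m i : Z) (p : pt) : Prop :=
  in_cube m p /\ (let '(x, y, z) := p in f m x y z = i).

Definition padd (p v : pt) : pt :=
  let '(a, b, c) := p in let '(d, e, g) := v in (a + d, b + e, c + g).

Definition unit_axis (v : pt) : Prop :=
  v = (1, 0, 0) \/ v = (-1, 0, 0) \/ v = (0, 1, 0) \/ v = (0, -1, 0)
  \/ v = (0, 0, 1) \/ v = (0, 0, -1).

Definition adjacent (P R : pt -> Prop) : Prop :=
  (forall p, ~ (P p /\ R p)) /\
  exists p q v, P p /\ R q /\ unit_axis v /\ padd p v = q.

(* Main.v *)
Require Import Defs.
From Stdlib Require Import ZArith Lia.
Open Scope Z_scope.

Lemma leb_t a b : a <= b -> (a <=? b) = true.
Proof. intro; apply Z.leb_le; lia. Qed.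
Lemma leb_f a b : b < a -> (a <=? b) = false.
Proof. intro; apply Z.leb_gt; lia. Qed.
Lemma eqb_f a b : a <> b -> (a =? b) = false.
Proof. intro; apply Z.eqb_neq; lia. Qed.

Theorem lemma2p1 (m : Z) (hm : 1 <= m) (i j : Z) :
  1 <= i -> i < j -> j <= m -> adjacent (Q m i) (Q m j).
Proof.
  intros Hi Hij Hj. split.
  - intros [[x y] z] [[_ H1] [_ H2]]. lia.
  - exists (0, i, j), (1, i, j), (1, 0, 0).
    assert (E1 : f m 0 i j = i).
    { unfold f, inr.
      rewrite (eqb_f j 0) by lia. rewrite (eqb_f j (m+1)) by lia.
      rewrite !Bool.andb_false_r. simpl.
      rewrite (leb_t 1 i), (leb_t i m), (leb_t 1 j), (leb_t j m) by lia.
      reflexivity. }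
    assert (E2 : f m 1 i j = j).
    { unfold f, inr.
      rewrite (eqb_f j 0) by lia. rewrite (eqb_f j (m+1)) by lia.
      rewrite (eqb_f i 0) by lia.
      rewrite !Bool.andb_false_r. simpl.
      rewrite (leb_t 1 (m+1)), (leb_t 1 i), (leb_t i (m+1)), (leb_t 1 j), (leb_t j m) by lia.
      reflexivity. }
    unfold Q, in_cube, unit_axis, padd.
    split; [split; [lia|exact E1]|].
    split; [split; [lia|exact E2]|].
    split; [left; reflexivity|].
    f_equal; [f_equal|]; ring.
Qed.
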